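(* There exist absolute constants $C_1,C_2>0$ such that the following holds. Let $\eta'\in(0,1)$, $k\in\mathbb{N}$, and $w=\lceil C_1k/(\eta')^2\rceil$. Let $\ell\in\mathbb{N}$, $\Delta=2^\ell$, $\mathbf{s}\in\mathbb{R}_{\ge0}^{G_\Delta}$, and let $\boldsymbol{\nu}_i\in\mathbb{R}^{C_{2^i}}$ ($i=0,\dots,\ell$) be arbitrary. Set $\mathbf{y}'_i=2^{-i}(\mathbf{P}_i\mathbf{s}+\boldsymbol{\nu}_i)$, $\mathbf{y}'=[\mathbf{y}'_0\cdots\mathbf{y}'_\ell]$. Run: $S_0=C_1$; for $i=1,\dots,\ell$, $T_i$ = children of cells in $S_{i-1}$, $S_i$ = a set of $\min\{w,|T_i|\}$ cells of $T_i$ with largest $\mathbf{y}'$-values; $S=\bigcup_iS_i$, $\hat{\mathbf{y}}=\mathbf{y}'|_S$; and let $\hat{\mathbf{s}}\in\arg\min_{\mathbf{s}'\in\mathbb{R}_{\ge0}^{G_\Delta}}\|\hat{\mathbf{y}}-\mathbf{P}\mathbf{s}'\|_1$. Let $\mathbf{y}^*\in\arg\min_{\mathbf{y}\in\mathcal{M}_w}\|\mathbf{P}\mathbf{s}-\mathbf{y}\|_1$, $T^*\in\mathcal{T}_w$ with $\mathrm{supp}(\mathbf{y}^* )\subseteq T^*$, and $V_i=(T^*\cap C_{2^i})\setminus S_i$. Then $$\|\mathbf{s}-\hat{\mathbf{s}}\|_{\mathrm{EMD}}\le\eta'\cdot\min_{\mathbf{s}'\ k\text{-sparse}}\|\mathbf{s}-\mathbf{s}'\|_{\mathrm{EMD}}+C_2\sum_{i=0}^\ell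 2^{-i}\big\|\boldsymbol{\nu}_i|_{V_i\cup S_i}\big\|_1,$$ the minimum over $k$-sparse $\mathbf{s}'\in\mathbb{R}^{G_\Delta}$.
   Context: $G_\Delta=\{(a/\Delta,b/\Delta): a,b\in\{0,\dots,\Delta-1\}\}$. Level-$i$ cells: $C_{2^i}=\{[a,a+2^{-i})\times[b,b+2^{-i}):(a,b)\in G_{2^i}\}$; $C_1$ is the single root cell $[0,1)^2$. $\mathbf{P}_i\in\{0,1\}^{C_{2^i}\times G_\Delta}$ with $\mathbf{P}_i(c,p)=1$ iff $p\in c$; $\mathbf{P}$ stacks $\mathbf{P}_0,2^{-1}\mathbf{P}_1,\dots,2^{-\ell}\mathbf{P}_\ell$. A cell $c'\in C_{2^i}$ is a child of $c\in C_{2^{i-1}}$ if $c'\subseteq c$ (a 4-ary tree rooted at $[0,1)^2$). $\mathcal{T}_w$: subtrees containing the root, closed under parents, with at most $w$ cells per level. $\mathcal{M}_w$: vectors $\mathbf{y}=[\mathbf{y}_0\cdots\mathbf{y}_\ell]$, $\mathbf{y}_i\in\mathbb{R}_{\ge0}^{C_{2^i}}$, with support in some $T\in\mathcal{T}_w$ and $\mathbf{y}(p)\ge2\sum_{c\text{ child of }p}\mathbf{y}(c)$ for all cells $p$ of levels $0,\dots,\ell-1$. $\mathbf{v}|_S$ is $\mathbf{v}$ restricted to $S$ (zero elsewhere); a vector is $k$-sparse if it has at most $k$ nonzero coordinates. $\mathrm{EMD}(\mathbf{p},\mathbf{q})$ for nonnegative $\mathbf{p},\mathbf{q}$ of equal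 mass is the minimum of $\sum\gamma(x,y)\|x-y\|_1$ over nonnegative couplings $\gamma$ with marginals $\mathbf{p},\mathbf{q}$; the EMD norm is $\|\mathbf{w}\|_{\mathrm{EMD}}=\min\{\mathrm{EMD}(\mathbf{p},\mathbf{q})+2\|\mathbf{r}\|_1:\mathbf{p},\mathbf{q}\ge0,\ \mathbf{p}-\mathbf{q}+\mathbf{r}=\mathbf{w},\ \|\mathbf{p}\|_1=\|\mathbf{q}\|_1\}$. *)

(* Defs.v *)
From HB Require Import structures.
From mathcomp Require Import all_boot all_order all_algebra.
From mathcomp Require Import classical_sets boolp reals.
From mathcomp Require Import Rstruct.
Set Implicit Arguments. Unset Strict Implicit. Unset Printing Implicit Defensive.
Import Order.TTheory GRing.Theory Num.Theory.
Local Open Scope ring_scope.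

Section Defs.
Variable R : realType.
Variable l : nat.

(* Grid G_Delta: the gpoint (a/Delta, b/Delta) is represented by (a, b). *)
Definition gpoint := ('I_(2 ^ l) * 'I_(2 ^ l))%type.

(* Cells of all levels 0..l: the level-i gcell
   [a/2^i,(a+1)/2^i) x [b/2^i,(b+1)/2^i) is represented by (i; (a, b)). *)
Definition gcell := {i : 'I_l.+1 & ('I_(2 ^ i) * 'I_(2 ^ i))%type}.

Definition lev (c : gcell) : nat := tag c.

Definition root : gcell := @Tagged 'I_l.+1 ord0 (fun i => ('I_(2 ^ i) * 'I_(2 ^ i))%type)
  (@Ordinal 1 0 isT, @Ordinal 1 0 isT).

Definition in_cell (c : gcell) (p : gpoint) : bool :=
  (((p.1 : nat) %/ 2 ^ (l - lev c) == (tagged c).1)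
  && ((p.2 : nat) %/ 2 ^ (l - lev c) == (tagged c).2))%N.

Definition is_child (c' c : gcell) : bool :=
  ((lev c' == (lev c).+1)
  && ((tagged c').1 %/ 2 == (tagged c).1) && ((tagged c').2 %/ 2 == (tagged c).2))%N.

(* P s, the stacked vector [P_0 s ; 2^-1 P_1 s ; ... ; 2^-l P_l s] *)
Definition Pmat (s : gpoint -> R) : gcell -> R :=
  fun c => (2 ^+ lev c)^-1 * \sum_(p : gpoint | in_cell c p) s p.

Definition l1c (v : gcell -> R) : R := \sum_(c : gcell) `|v c|.
Definition l1p (v : gpoint -> R) : R := \sum_(p : gpoint) `|v p|.

Definition in_Tw (w : nat) (T : {set gcell}) : Prop :=
  [/\ root \in T,
      (forall c' c, is_child c' c -> c' \in T -> c \in T)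
    & (forall i : nat, #|[set c in T | lev c == i]| <= w)%N].

Definition in_Mw (w : nat) (y : gcell -> R) : Prop :=
  [/\ (forall c, 0 <= y c),
      (exists T, in_Tw w T /\ forall c, y c != 0 -> c \in T)
    & (forall p, (lev p < l)%N -> 2 * \sum_(c : gcell | is_child c p) y c <= y p)].

Definition dist1 (x y : gpoint) : R :=
  (`|(x.1 : nat)%:R - (y.1 : nat)%:R| + `|(x.2 : nat)%:R - (y.2 : nat)%:R|)
    / (2 ^ l)%:R.

Definition EMD (p q : gpoint -> R) : R :=
  inf [set v | exists gamma : gpoint -> gpoint -> R,
         [/\ (forall x y, 0 <= gamma x y),
             (forall x, \sum_(y : gpoint) gamma x y = p x),
             (forall y, \sum_(x : gpoint) gamma x y = q y)
           & v = \sum_(x : gpoint) \sum_(y : gpoint) gamma x y * dist1 x y]].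

Definition emd_norm (w : gpoint -> R) : R :=
  inf [set v | exists p q r : gpoint -> R,
         [/\ (forall x, 0 <= p x), (forall x, 0 <= q x),
             (forall x, p x - q x + r x = w x),
             \sum_(x : gpoint) p x = \sum_(x : gpoint) q x
           & v = EMD p q + 2 * l1p r]].

Definition best_ksparse_emd (k : nat) (s : gpoint -> R) : R :=
  inf [set v | exists s' : gpoint -> R,
         (#|[set x | s' x != 0%R]| <= k)%N /\ v = emd_norm (fun x => s x - s' x)].

Definition children (A : {set gcell}) : {set gcell} :=
  [set c | [exists p in A, is_child c p]].

Definition greedy_run (w : nat) (y' : gcell -> R) (S : nat -> {set gcell}) : Prop :=
  S 0%N = [set root] /\
  forall i : nat, (1 <= i <= l)%N ->
    [/\ S i \subset children (S i.-1),
        #|S i| = minn w #|children (S i.-1)|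
      & forall c c', c \in S i -> c' \in children (S i.-1) :\: S i -> y' c' <= y' c].

End Defs.

(* Main.v *)
Require Import Defs.
From HB Require Import structures.
From mathcomp Require Import all_boot all_order all_algebra.
From mathcomp Require Import classical_sets boolp reals.
From mathcomp Require Import Rstruct.
From mathcomp Require Import zify ring lra.
Set Implicit Arguments. Unset Strict Implicit. Unset Printing Implicit Defensive.
Import Order.TTheory GRing.Theory Num.Theory.
Local Open Scope ring_scope.

Section Cells.
Local Open Scope nat_scope.
Variable l : nat.
Local Notation gcell := (gcell l).
Local Notation gpoint := (gpoint l).

Lemma e2gt0 i : (0 < 2 ^ i)%N. Proof. by rewrite expn_gt0. Qed.

Definition clamp (i : nat) (a : nat) : 'I_(2 ^ i) :=
  @Ordinal (2 ^ i) (minn a (2 ^ i).-1) (ltac:(have := e2gt0 i; lia)).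

Definition mkcell (i : nat) (a b : nat) : gcell :=
  @Tagged 'I_l.+1 (inord i) (fun i : 'I_l.+1 => ('I_(2 ^ i) * 'I_(2 ^ i))%type)
     (clamp (inord i) a, clamp (inord i) b).

Definition cx (c : gcell) : nat := (tagged c).1.
Definition cy (c : gcell) : nat := (tagged c).2.

Lemma lev_le (c : gcell) : (lev c <= l)%N.
Proof. by case: c => i ab; rewrite /lev /= -ltnS ltn_ord. Qed.

Lemma cx_lt (c : gcell) : (cx c < 2 ^ lev c)%N.
Proof. by case: c => i [a b]; rewrite /cx /lev /=. Qed.
Lemma cy_lt (c : gcell) : (cy c < 2 ^ lev c)%N.
Proof. by case: c => i [a b]; rewrite /cy /lev /=. Qed.

Lemma lev_mkcell i a b : (i <= l)%N -> lev (mkcell i a b) = i.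
Proof. by move=> H; rewrite /lev /mkcell /= inordK. Qed.

Lemma cx_mkcell i a b : (i <= l)%N -> (a < 2 ^ i)%N -> cx (mkcell i a b) = a.
Proof. move=> H Ha; rewrite /cx /mkcell /= inordK //. have := e2gt0 i; lia. Qed.
Lemma cy_mkcell i a b : (i <= l)%N -> (b < 2 ^ i)%N -> cy (mkcell i a b) = b.
Proof. move=> H Ha; rewrite /cy /mkcell /= inordK //. have := e2gt0 i; lia. Qed.

Lemma cell_eq (c : gcell) i a b : lev c = i -> cx c = a -> cy c = b ->
  c = mkcell i a b.
Proof.
case: c => j [x y]; rewrite /lev /cx /cy /= => Hj Hx Hy.
have Ej : j = inord i by apply: val_inj; rewrite /= inordK // -Hj ltn_ord.
subst j. rewrite /mkcell; rewrite /Tagged; congr existT; congr pair; apply: val_inj => /=.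
  have := ltn_ord x; lia.
have := ltn_ord y; lia.
Qed.

Lemma cell_eq2 (c c' : gcell) : lev c = lev c' -> cx c = cx c' -> cy c = cy c' -> c = c'.
Proof.
move=> H1 H2 H3; rewrite (cell_eq H1 H2 H3); exact/esym/cell_eq.
Qed.


Lemma div_lt (x : nat) i : (i <= l)%N -> (x < 2 ^ l)%N -> (x %/ 2 ^ (l - i) < 2 ^ i)%N.
Proof.
move=> Hi Hx; rewrite ltn_divLR ?e2gt0 // -expnD subnKC //.
Qed.

Definition pcell (i : nat) (pt : gpoint) : gcell :=
  mkcell i (pt.1 %/ 2 ^ (l - i)) (pt.2 %/ 2 ^ (l - i)).

Lemma lev_pcell i (pt : gpoint) : (i <= l)%N -> lev (pcell i pt) = i.
Proof. exact: lev_mkcell. Qed.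
Lemma cx_pcell i (pt : gpoint) : (i <= l)%N -> cx (pcell i pt) = pt.1 %/ 2 ^ (l - i).
Proof. by move=> H; rewrite cx_mkcell // div_lt. Qed.
Lemma cy_pcell i (pt : gpoint) : (i <= l)%N -> cy (pcell i pt) = pt.2 %/ 2 ^ (l - i).
Proof. by move=> H; rewrite cy_mkcell // div_lt. Qed.

Lemma in_cellE (c : gcell) (pt : gpoint) : in_cell c pt =
  ((pt.1 %/ 2 ^ (l - lev c) == cx c) && (pt.2 %/ 2 ^ (l - lev c) == cy c))%N.
Proof. by []. Qed.

Lemma in_cellP (c : gcell) (pt : gpoint) : in_cell c pt = (c == pcell (lev c) pt).
Proof.
rewrite in_cellE; apply/idP/eqP.
  case/andP => /eqP H1 /eqP H2; apply: cell_eq2.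
  - by rewrite lev_pcell // lev_le.
  - by rewrite cx_pcell ?lev_le.
  - by rewrite cy_pcell ?lev_le.
move=> E; have Hl := lev_le c.
by rewrite E lev_pcell // cx_pcell // cy_pcell // !eqxx.
Qed.

Lemma in_pcell i (pt : gpoint) : (i <= l)%N -> in_cell (pcell i pt) pt.
Proof. by move=> H; rewrite in_cellP lev_pcell. Qed.

Lemma tag_lev (c : gcell) (i : 'I_l.+1) : (tag c == i) = (lev c == i).
Proof. by []. Qed.

Lemma sum_in_cell (R : realType) (F : gcell -> R) (pt : gpoint) :
  (\sum_(c | in_cell c pt) F c = \sum_(i < l.+1) F (pcell i pt))%R.
Proof.
rewrite (partition_big (fun c : gcell => tag c) xpredT) //=.
apply: eq_bigr => i _.
rewrite (@eq_bigl _ _ _ _ _ _ (pred1 (pcell i pt))) ?big_pred1_eq // => c /=.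
rewrite tag_lev in_cellP; apply/idP/idP.
  by case/andP => /eqP E /eqP L; rewrite -L; apply/eqP.
move/eqP=> ->; have Hi : (i <= l)%N by rewrite -ltnS ltn_ord.
by rewrite lev_pcell // !eqxx.
Qed.

Lemma is_childE (c' c : gcell) : is_child c' c =
  [&& lev c' == (lev c).+1, cx c' %/ 2 == cx c & cy c' %/ 2 == cy c]%N.
Proof. by rewrite /is_child andbA. Qed.

Lemma child_in (c' c : gcell) (pt : gpoint) : is_child c' c -> in_cell c' pt -> in_cell c pt.
Proof.
rewrite is_childE !in_cellE => /and3P [/eqP H1 /eqP H2 /eqP H3] /andP [/eqP H4 /eqP H5].
have Hl := lev_le c'.
have E : (2 ^ (l - lev c) = 2 ^ (l - lev c') * 2)%N.
  by rewrite -expnSr; congr (_ ^ _); lia.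
by rewrite E !divnMA H4 H5 H2 H3 !eqxx.
Qed.

Lemma pcell_child (c : gcell) (pt : gpoint) : (lev c < l)%N -> in_cell c pt -> is_child (pcell (lev c).+1 pt) c.
Proof.
move=> Hl; rewrite in_cellE is_childE => /andP [/eqP H4 /eqP H5].
rewrite lev_pcell // cx_pcell // cy_pcell // eqxx /=.
have E : (2 ^ (l - lev c) = 2 ^ (l - (lev c).+1) * 2)%N.
  by rewrite -expnSr; congr (_ ^ _); lia.
by rewrite -!divnMA -E H4 H5 !eqxx.
Qed.

Lemma child_sum (R : realType) (f : gpoint -> R) (c : gcell) : (lev c < l)%N ->
  (\sum_(c' | is_child c' c) \sum_(pt | in_cell c' pt) f pt =
  \sum_(pt | in_cell c pt) f pt)%R.
Proof.
move=> Hl.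
rewrite (exchange_big_dep xpredT) //=.
rewrite [RHS]big_mkcond /=; apply: eq_bigr => pt _.
case: ifP => Hin.
  rewrite (@eq_bigl _ _ _ _ _ _ (pred1 (pcell (lev c).+1 pt))) ?big_pred1_eq // => c' /=.
  apply/idP/eqP.
    case/andP => Hch Hc'; move: Hc'; rewrite in_cellP => /eqP ->.
    move: Hch; rewrite is_childE => /and3P [/eqP -> _ _] //.
  move=> ->; rewrite pcell_child //= in_pcell //.
rewrite big_pred0 // => c'; apply/negP => /andP [H1 H2].
by rewrite (child_in H1 H2) in Hin.
Qed.

Definition par (c : gcell) : gcell := mkcell (lev c).-1 (cx c %/ 2) (cy c %/ 2).

Lemma par_child (c : gcell) : (0 < lev c)%N -> is_child c (par c).
Proof.
move=> H; have Hl := lev_le c.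
have E : (2 ^ lev c = 2 ^ (lev c).-1 * 2)%N by rewrite -expnSr prednK.
rewrite is_childE /par lev_mkcell ?cx_mkcell ?cy_mkcell; try lia.
- by rewrite ltn_divLR // -E; apply: cy_lt.
- by rewrite ltn_divLR // -E; apply: cx_lt.
Qed.

Lemma lev0_root (c : gcell) : lev c = 0%N -> c = Defs.root l.
Proof.
move=> H; apply: cell_eq2 => //.
  by have := cx_lt c; rewrite H expn0 ltnS leqn0 => /eqP ->.
by have := cy_lt c; rewrite H expn0 ltnS leqn0 => /eqP ->.
Qed.

Lemma lev_root : lev (Defs.root l) = 0%N.
Proof. by []. Qed.

End Cells.
Local Open Scope ring_scope.

Section InfLemmas.
Variable R : realType.
Implicit Types E : set R.

Lemma inf_le_mem E x : (forall y, E y -> 0 <= y) -> E x -> inf E <= x.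
Proof. move=> H Ex; apply: (ge_inf _ Ex); exists 0 => y Ey; exact: H. Qed.

Lemma inf_ge0 E : (forall y, E y -> 0 <= y) -> 0 <= inf E.
Proof.
move=> H; case: (pselect (nonempty E)) => [ne|e].
  by apply: lb_le_inf => // y /H.
have -> : E = set0.
  by apply/seteqP; split => // y Ey; exfalso; apply: e; exists y.
by rewrite inf0.
Qed.

Lemma le_inf_of E a : nonempty E -> (forall y, E y -> a <= y) -> a <= inf E.
Proof. by move=> ne H; apply: lb_le_inf. Qed.

End InfLemmas.

Section Arith.
Local Open Scope nat_scope.

Lemma corner_same_nat a b m : 0 < m ->
  ((a %% m == 0) && (a %/ m == b %/ m)) = (a == b %/ m * m).
Proof.
move=> Hm; apply/idP/eqP.
  by case/andP => /eqP H1 /eqP H2; rewrite {1}(divn_eq a m) H1 H2 addn0.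
by move=> ->; rewrite modnMl mulnK // !eqxx.
Qed.

Lemma same_close a b m : 0 < m -> a %/ m = b %/ m -> a < b + m.
Proof.
move=> Hm H; rewrite {1}(divn_eq a m) H.
have := ltn_pmod a Hm; have := leq_trunc_div b m; lia.
Qed.

Lemma div_mono a b m k : a %/ m = b %/ m -> a %/ (m * k) = b %/ (m * k).
Proof. by rewrite !divnMA => ->. Qed.

End Arith.

Section StepA.
Variable R : realType.
Variable l : nat.
Local Notation gcell := (gcell l).
Local Notation gpoint := (gpoint l).

Definition mj (j : nat) : nat := (2 ^ (l - j))%N.
Lemma mj_gt0 j : (0 < mj j)%N. Proof. exact: e2gt0. Qed.

Definition same (j : nat) (x y : gpoint) : bool :=
  ((x.1 %/ mj j == y.1 %/ mj j) && (x.2 %/ mj j == y.2 %/ mj j))%N.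
Definition corner (j : nat) (x : gpoint) : bool :=
  ((x.1 %% mj j == 0) && (x.2 %% mj j == 0))%N.

Lemma rep_lt (a : 'I_(2 ^ l)) j : (a %/ mj j * mj j < 2 ^ l)%N.
Proof. exact: leq_ltn_trans (leq_trunc_div _ _) (ltn_ord a). Qed.

Definition rep (j : nat) (y : gpoint) : gpoint :=
  (Ordinal (rep_lt y.1 j), Ordinal (rep_lt y.2 j)).

Lemma corner_same_rep j x y : (corner j x && same j x y) = (x == rep j y).
Proof.
by rewrite /corner /same andbACA !corner_same_nat ?mj_gt0.
Qed.

Lemma same_refl j x : same j x x.
Proof. by rewrite /same !eqxx. Qed.

Lemma same_sym j x y : same j x y = same j y x.
Proof. by rewrite /same [(x.1 %/ _ == _)%N]eq_sym [(x.2 %/ _ == _)%N]eq_sym. Qed.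

Lemma same_trans j x y z : same j x y -> same j x z = same j y z.
Proof. by rewrite /same => /andP [/eqP -> /eqP ->]. Qed.

Lemma same_mono j j' x y : (j' <= j)%N -> (j <= l)%N -> same j x y -> same j' x y.
Proof.
move=> H1 H2; have E : mj j' = (mj j * 2 ^ (j - j'))%N.
  by rewrite /mj -expnD; f_equal; lia.
rewrite /same E => /andP [/eqP /div_mono -> /eqP /div_mono ->].
by rewrite !eqxx.
Qed.

Lemma same_in_cell j x y : (j <= l)%N -> in_cell (pcell j x) y = same j x y.
Proof.
move=> H; rewrite in_cellE lev_pcell // cx_pcell // cy_pcell //.
by rewrite /same /mj [(y.1 %/ _ == _)%N]eq_sym [(y.2 %/ _ == _)%N]eq_sym.
Qed.

Variable f : gpoint -> R.

Definition Dj (j : nat) (x : gpoint) : R := \sum_(y | same j x y) f y.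
Definition Wj (j : nat) (x : gpoint) : R := if corner j x then Dj j x else 0.

Lemma sumW j (Q : pred gpoint) : (j <= l)%N ->
  (forall x y, same j x y -> Q x = Q y) ->
  \sum_(x | Q x) Wj j x = \sum_(y | Q y) f y.
Proof.
move=> Hj HQ.
transitivity (\sum_(x | Q x && corner j x) \sum_(y | same j x y) f y).
  by rewrite big_mkcondr.
rewrite (exchange_big_dep xpredT) //= [RHS]big_mkcond /=.
apply: eq_bigr => y _.
have Hrep : same j (rep j y) y.
  by have := corner_same_rep j (rep j y) y; rewrite eqxx => /andP [].
case: ifP => Qy.
  rewrite (@eq_bigl _ _ _ _ _ _ (pred1 (rep j y))) ?big_pred1_eq // => x /=.
  rewrite -andbA corner_same_rep; case: eqP => [->|] /=.
    by rewrite (HQ _ _ Hrep) Qy.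
  by rewrite andbF.
rewrite big_pred0 // => x; rewrite -andbA corner_same_rep.
case: eqP => [->|]; last by rewrite andbF.
by rewrite (HQ _ _ Hrep) Qy.
Qed.

Lemma sumW_all j : (j <= l)%N -> \sum_x Wj j x = \sum_y f y.
Proof. by move=> H; apply: (@sumW j xpredT). Qed.

Lemma sumW_cell j j' x0 : (j' <= j)%N -> (j <= l)%N ->
  \sum_(x | same j' x0 x) Wj j x = \sum_(y | same j' x0 y) f y.
Proof.
move=> H1 H2; apply: sumW => // x y Hs.
by rewrite same_sym (@same_trans _ _ _ x0 (same_mono H1 H2 Hs)) same_sym.
Qed.

Lemma Wl x : Wj l x = f x.
Proof.
have E : mj l = 1%N by rewrite /mj subnn.
rewrite /Wj /corner E !modn1 eqxx /Dj.
rewrite (@eq_bigl _ _ _ _ _ _ (pred1 x)) ?big_pred1_eq // => y /=.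
case: x y => [a b] [c d] /=. by rewrite /same E !divn1 /= xpair_eqE (eq_sym c) (eq_sym d).
Qed.

Lemma sum_subset (T : finType) (A B : pred T) (G : T -> R) :
  (forall c, A c -> B c) -> (forall c, B c -> 0 <= G c) ->
  \sum_(c | A c) G c <= \sum_(c | B c) G c.
Proof.
move=> HAB HG; rewrite [X in X <= _]big_mkcond [X in _ <= X]big_mkcond /=.
apply: ler_sum => c _; case: ifP => Ac; first by rewrite HAB.
by case: ifP => // Bc; rewrite HG.
Qed.

Definition Aj (j : nat) : R :=
  \sum_(c : gcell | lev c == j) `|\sum_(pt | in_cell c pt) f pt|.

Lemma absW j : (j <= l)%N -> \sum_x `|Wj j x| <= Aj j.
Proof.
move=> Hj.
have -> : \sum_x `|Wj j x| = \sum_(x in [set x | corner j x]) `|Dj j x|.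
  rewrite [RHS]big_mkcond /=; apply: eq_bigr => x _.
  by rewrite inE /Wj; case: ifP => //; rewrite normr0.
have Ec : forall x, Dj j x = \sum_(pt | in_cell (pcell j x) pt) f pt.
  by move=> x; apply: eq_bigl => y; rewrite same_in_cell.
under eq_bigr do rewrite Ec.
rewrite -(big_imset (fun c => `|\sum_(pt | in_cell c pt) f pt|)) /=; last first.
  move=> x x'; rewrite !inE => Cx Cx' E.
  have H1 : same j x x'.
    by rewrite -same_in_cell // E in_pcell.
  have := corner_same_rep j x x'; rewrite Cx H1 => /esym /eqP ->.
  have := corner_same_rep j x' x'; rewrite Cx' same_refl => /esym /eqP.
  by move=> <-.
apply: sum_subset => // c /imsetP [x _ ->]; by rewrite lev_pcell.
Qed.


Lemma Aj_ge0 j : 0 <= Aj j.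
Proof. by apply: sumr_ge0 => c _. Qed.

Definition Zj j x := Wj j.+1 x - Wj j x.
Definition Zp j x := (Zj j x + `|Zj j x|) / 2.
Definition Zn j x := (`|Zj j x| - Zj j x) / 2.

Lemma Zp_ge0 j x : 0 <= Zp j x.
Proof.
rewrite /Zp divr_ge0 //; have := ler_norm (- Zj j x); rewrite normrN; lra.
Qed.
Lemma Zn_ge0 j x : 0 <= Zn j x.
Proof. rewrite /Zn divr_ge0 //; have := ler_norm (Zj j x); lra. Qed.
Lemma ZpnE j x : Zp j x - Zn j x = Zj j x.
Proof. rewrite /Zp /Zn -mulrBl. have -> : Zj j x + `|Zj j x| - (`|Zj j x| - Zj j x) = Zj j x * 2 by ring. by rewrite mulfK // pnatr_eq0. Qed.

Lemma sumZ_cell j x0 : (j < l)%N -> \sum_(x | same j x0 x) Zj j x = 0.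
Proof.
move=> H; rewrite sumrB sumW_cell // sumW_cell //; last exact: ltnW.
by apply/eqP; rewrite subr_eq0.
Qed.

Lemma sumZpn_cell j x0 : (j < l)%N ->
  \sum_(x | same j x0 x) Zp j x = \sum_(x | same j x0 x) Zn j x.
Proof.
move=> H; apply/eqP; rewrite -subr_eq0 -sumrB.
by under eq_bigr do rewrite ZpnE; rewrite sumZ_cell.
Qed.

Definition Mj j x := \sum_(y | same j x y) Zn j y.
Definition gam j x y := if same j x y then Zp j x * Zn j y / Mj j x else 0.

Lemma Mj_ge0 j x : 0 <= Mj j x.
Proof. by apply: sumr_ge0 => y _; exact: Zn_ge0. Qed.

Lemma gam_ge0 j x y : 0 <= gam j x y.
Proof.
rewrite /gam; case: ifP => // _.
apply: divr_ge0; [apply: mulr_ge0; [exact: Zp_ge0|exact: Zn_ge0]|exact: Mj_ge0].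
Qed.

Lemma Mj_same j x y : same j x y -> Mj j x = Mj j y.
Proof. by move=> H; apply: eq_bigl => z; rewrite (same_trans _ H). Qed.

Lemma gam_m1 j x : (j < l)%N -> \sum_y gam j x y = Zp j x.
Proof.
move=> Hj; rewrite /gam -big_mkcond /=.
under eq_bigr do rewrite mulrAC.
rewrite -mulr_sumr -/(Mj j x).
have [M0|M0] := eqVneq (Mj j x) 0.
  have := @psumr_eq0P _ _ (same j x) (Zp j) (fun y _ => Zp_ge0 j y).
  rewrite sumZpn_cell // -/(Mj j x) M0 => /(_ erefl x (same_refl j x)) ->.
  by rewrite !mul0r.
by rewrite mulfVK.
Qed.

Lemma gam_m2 j y : (j < l)%N -> \sum_x gam j x y = Zn j y.
Proof.
move=> Hj; rewrite /gam.
transitivity (\sum_(x | same j y x) Zp j x * (Zn j y / Mj j y)).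
  rewrite [RHS]big_mkcond /=; apply: eq_bigr => x _.
  rewrite same_sym; case: ifP => // H.
  by rewrite (Mj_same H) [in RHS]mulrA.
rewrite -mulr_suml sumZpn_cell // -/(Mj j y).
have [M0|M0] := eqVneq (Mj j y) 0.
  have := @psumr_eq0P _ _ (same j y) (Zn j) (fun y _ => Zn_ge0 j y).
  rewrite -/(Mj j y) M0 => /(_ erefl y (same_refl j y)) ->.
  by rewrite !mul0r.
by rewrite mulrC divfK.
Qed.

Lemma nat_dist (a b m : nat) : (a < b + m)%N -> (b < a + m)%N ->
  `|a%:R - b%:R| <= m%:R :> R.
Proof.
move=> H1 H2; rewrite ler_norml.
have H1' : a%:R <= b%:R + m%:R :> R by rewrite -natrD ler_nat ltnW.
have H2' : b%:R <= a%:R + m%:R :> R by rewrite -natrD ler_nat ltnW.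
apply/andP; split; lra.
Qed.

Lemma dist_same j x y : (j <= l)%N -> same j x y -> dist1 R x y <= 2 / 2 ^+ j.
Proof.
move=> Hj /andP [/eqP H1 /eqP H2].
have c1 := same_close (mj_gt0 j) H1; have c2 := same_close (mj_gt0 j) (esym H1).
have c3 := same_close (mj_gt0 j) H2; have c4 := same_close (mj_gt0 j) (esym H2).
have d1 := nat_dist c1 c2; have d2 := nat_dist c3 c4.
rewrite /dist1 ler_pdivrMr ?ltr0n ?e2gt0 //.
have -> : (2 ^ l)%:R = (mj j)%:R * 2 ^+ j :> R.
  by rewrite /mj -natrX -natrM -expnD subnK.
rewrite [_ * 2 ^+ j]mulrC mulrA divfK; first lra.
by rewrite expf_neq0 // pnatr_eq0.
Qed.

Lemma dist1_ge0 (x y : gpoint) : 0 <= dist1 R x y.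
Proof. by rewrite /dist1 divr_ge0 ?addr_ge0. Qed.

Lemma cost_j j : (j < l)%N ->
  \sum_x \sum_y gam j x y * dist1 R x y <= 2 / 2 ^+ j * \sum_x Zp j x.
Proof.
move=> Hj; rewrite mulr_sumr; apply: ler_sum => x _.
rewrite -gam_m1 // mulr_sumr; apply: ler_sum => y _.
case Hs: (same j x y); last by rewrite /gam Hs !mul0r mulr0.
rewrite [X in _ <= X]mulrC; apply: ler_wpM2l; first exact: gam_ge0.
by apply: dist_same => //; exact: ltnW.
Qed.


Lemma sumZp j : (j < l)%N -> \sum_x Zp j x = (\sum_x `|Zj j x|) / 2.
Proof.
move=> H; rewrite /Zp -mulr_suml big_split /=.
have -> : \sum_x Zj j x = 0.
  by rewrite sumrB !sumW_all // ?subrr // ltnW.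
by rewrite add0r.
Qed.

Lemma absZ j : (j < l)%N -> \sum_x `|Zj j x| <= Aj j.+1 + Aj j.
Proof.
move=> H; apply: le_trans (_ : \sum_x (`|Wj j.+1 x| + `|Wj j x|) <= _).
  by apply: ler_sum => x _; apply: ler_normB.
by rewrite big_split /= lerD // absW // ltnW.
Qed.

Lemma EMD_ge0 (p q : gpoint -> R) : 0 <= EMD p q.
Proof.
apply: inf_ge0 => v [g [g0 _ _ ->]]; apply: sumr_ge0 => x _.
by apply: sumr_ge0 => y _; rewrite mulr_ge0 ?dist1_ge0.
Qed.

Lemma EMD_le (p q : gpoint -> R) g : (forall x y, 0 <= g x y) ->
  (forall x, \sum_y g x y = p x) -> (forall y, \sum_x g x y = q y) ->
  EMD p q <= \sum_x \sum_y g x y * dist1 R x y.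
Proof.
move=> H0 H1 H2; apply: inf_le_mem; last by exists g; split.
move=> v [g' [g0 _ _ ->]]; apply: sumr_ge0 => x _.
by apply: sumr_ge0 => y _; rewrite mulr_ge0 ?dist1_ge0.
Qed.

Lemma l1p_ge0 (r : gpoint -> R) : 0 <= l1p r.
Proof. by apply: sumr_ge0 => x _. Qed.

Lemma emd_le (w p q r : gpoint -> R) : (forall x, 0 <= p x) -> (forall x, 0 <= q x) ->
  (forall x, p x - q x + r x = w x) -> \sum_x p x = \sum_x q x ->
  emd_norm w <= EMD p q + 2 * l1p r.
Proof.
move=> H1 H2 H3 H4; apply: inf_le_mem; last by exists p, q, r; split.
move=> v [p' [q' [r' [_ _ _ _ ->]]]].
by rewrite addr_ge0 ?EMD_ge0 // mulr_ge0 ?l1p_ge0.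
Qed.

Lemma stepA_main : emd_norm f <= 5 * \sum_(j < l.+1) Aj j / 2 ^+ j.
Proof.
pose p x := \sum_(j < l) Zp j x.
pose q x := \sum_(j < l) Zn j x.
pose g x y := \sum_(j < l) gam j x y.
have Hp : forall x, 0 <= p x by move=> x; apply: sumr_ge0 => j _; apply: Zp_ge0.
have Hq : forall x, 0 <= q x by move=> x; apply: sumr_ge0 => j _; apply: Zn_ge0.
have Hf : forall x, p x - q x + Wj 0 x = f x.
  move=> x; rewrite /p /q -sumrB.
  under eq_bigr do rewrite ZpnE.
  by rewrite /Zj -(big_mkord xpredT (fun j => Wj j.+1 x - Wj j x)) telescope_sumr // Wl subrK.
have Hpq : \sum_x p x = \sum_x q x.
  rewrite /p /q exchange_big [RHS]exchange_big /=; apply: eq_bigr => j _.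
  apply/eqP; rewrite -subr_eq0 -sumrB; under eq_bigr do rewrite ZpnE.
  by rewrite /Zj sumrB !sumW_all ?subrr // ltnW.
have Hg0 : forall x y, 0 <= g x y by move=> x y; apply: sumr_ge0 => j _; apply: gam_ge0.
have Hg1 : forall x, \sum_y g x y = p x.
  by move=> x; rewrite /g exchange_big; apply: eq_bigr => j _; apply: gam_m1.
have Hg2 : forall y, \sum_x g x y = q y.
  by move=> y; rewrite /g exchange_big; apply: eq_bigr => j _; apply: gam_m2.
apply: le_trans (emd_le Hp Hq Hf Hpq) _.
apply: le_trans (lerD (EMD_le Hg0 Hg1 Hg2) (lexx _)) _.
have Hc : \sum_x \sum_y g x y * dist1 R x y <= \sum_(j < l) (Aj j.+1 + Aj j) / 2 ^+ j.
  have -> : \sum_x \sum_y g x y * dist1 R x y = \sum_x \sum_(j < l) \sum_y gam j x y * dist1 R x y.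
    apply: eq_bigr => x _; rewrite [RHS]exchange_big; apply: eq_bigr => y _.
    by rewrite mulr_suml.
  rewrite exchange_big; apply: ler_sum => j _.
  apply: le_trans (cost_j (ltn_ord j)) _; rewrite sumZp //.
  have -> : 2 / 2 ^+ j * ((\sum_x `|Zj j x|) / 2) = (\sum_x `|Zj j x|) / 2 ^+ j :> R.
    by field; rewrite expf_neq0 // pnatr_eq0.
  by apply: ler_wpM2r; [rewrite invr_ge0 exprn_ge0 | apply: absZ].
have Hr : l1p (Wj 0) <= Aj 0 by apply: absW.
set S := \sum_(j < l.+1) Aj j / 2 ^+ j.
have S0 : 0 <= S by apply: sumr_ge0 => j _; rewrite divr_ge0 ?Aj_ge0 ?exprn_ge0.
have E1 : \sum_(j < l) Aj j.+1 / 2 ^+ j = 2 * (S - Aj 0).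
  rewrite /S big_ord_recl /= expr0 divr1 [Aj 0 + _]addrC addrK mulr_sumr.
  apply: eq_bigr => j _; rewrite exprS; field.
  by rewrite expf_neq0 // pnatr_eq0.
have E2 : \sum_(j < l) Aj j / 2 ^+ j <= S.
  rewrite /S big_ord_recr /= lerDl divr_ge0 ?Aj_ge0 ?exprn_ge0 //.
have E3 : \sum_(j < l) (Aj j.+1 + Aj j) / 2 ^+ j =
  \sum_(j < l) Aj j.+1 / 2 ^+ j + \sum_(j < l) Aj j / 2 ^+ j.
  by rewrite -big_split /=; apply: eq_bigr => j _; rewrite mulrDl.
have HA0 : Aj 0 <= S.
  rewrite /S big_ord_recl /= expr0 divr1 lerDl.
  by apply: sumr_ge0 => j _; rewrite divr_ge0 ?Aj_ge0 ?exprn_ge0.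
rewrite E3 E1 in Hc.
lra.
Qed.

End StepA.

Section Geom.
Variable R : realType.

Lemma geom_le2 n : \sum_(i < n) (2 ^+ i)^-1 <= 2 :> R.
Proof.
elim: n => [|n IH]; first by rewrite big_ord0.
rewrite big_ord_recl /= expr0 invr1.
have -> : \sum_(i < n) (2 ^+ (bump 0 i))^-1 = (\sum_(i < n) (2 ^+ i)^-1) / 2 :> R.
  rewrite mulr_suml; apply: eq_bigr => i _; rewrite /bump /= exprS invfM mulrC //.
lra.
Qed.

Lemma geom_tail n (t : R) : 0 <= t ->
  \sum_(i < n) (if (2 ^+ i)^-1 < t then (2 ^+ i)^-1 else 0) <= 2 * t.
Proof.
elim: n t => [|n IH] t t0; first by rewrite big_ord0 mulr_ge0.
have [t1|t1] := lerP 1 t.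
  apply: le_trans (_ : \sum_(i < n.+1) (2 ^+ i)^-1 <= _).
    apply: ler_sum => i _; case: ifP => // _; by rewrite invr_ge0 exprn_ge0.
  apply: le_trans (geom_le2 _) _; lra.
rewrite big_ord_recl /= expr0 invr1.
have -> : (1 < t) = false by apply/negbTE; rewrite -leNgt ltW.
rewrite add0r.
have E : forall i : 'I_n, (if (2 ^+ (bump 0 i))^-1 < t then (2 ^+ (bump 0 i))^-1 else 0)
   = (if (2 ^+ i)^-1 < 2 * t then (2 ^+ i)^-1 else 0) / 2 :> R.
  move=> i; rewrite /bump /= exprS invfM.
  have -> : ((2 ^+ i)^-1 < 2 * t) = ((2^-1 * (2 ^+ i)^-1) < t).
    by rewrite -[in RHS](ltr_pM2l (_ : 0 < 2)) // mulrA divff ?mul1r // pnatr_eq0.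
  by case: ifP => _; rewrite ?mul0r // mulrC.
under eq_bigr do rewrite E.
rewrite -mulr_suml.
have := IH (2 * t) (mulr_ge0 (ler0n _ 2) t0); lra.
Qed.

End Geom.

Section StepD.
Variable R : realType.
Variable l : nat.
Local Notation gcell := (gcell l).
Local Notation gpoint := (gpoint l).


Lemma dist1_xx (x : gpoint) : dist1 R x x = 0.
Proof. by rewrite /dist1 !subrr normr0 addr0 mul0r. Qed.

Lemma dist1_tri (x y z : gpoint) : dist1 R x z <= dist1 R x y + dist1 R y z.
Proof.
rewrite /dist1 -mulrDl ler_wpM2r ?invr_ge0 ?ler0n //.
have := ler_distD ((y.1 : nat)%:R : R) (x.1 : nat)%:R (z.1 : nat)%:R.
have := ler_distD ((y.2 : nat)%:R : R) (x.2 : nat)%:R (z.2 : nat)%:R.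
move=> H1 H2; lra.
Qed.

Lemma dist1_le2 (x y : gpoint) : dist1 R x y <= 2.
Proof.
have H1 : (x.1 < y.1 + 2 ^ l)%N by have := ltn_ord x.1; lia.
have H2 : (y.1 < x.1 + 2 ^ l)%N by have := ltn_ord y.1; lia.
have H3 : (x.2 < y.2 + 2 ^ l)%N by have := ltn_ord x.2; lia.
have H4 : (y.2 < x.2 + 2 ^ l)%N by have := ltn_ord y.2; lia.
have d1 := nat_dist R H1 H2; have d2 := nat_dist R H3 H4.
rewrite /dist1 ler_pdivrMr ?ltr0n ?e2gt0 //; lra.
Qed.

Variable K : {set gpoint}.
Variable q0 : gpoint.
Hypothesis Kq0 : q0 \in K.

Definition qf (x : gpoint) : gpoint := Order.arg_min q0 (mem K) (dist1 R x).
Definition hK (x : gpoint) : R := dist1 R x (qf x).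

Lemma qf_spec x : qf x \in K /\ forall q, q \in K -> hK x <= dist1 R x q.
Proof. by rewrite /hK /qf; case: arg_minP => // q Hq H; split => // q' /H. Qed.

Lemma hK_ge0 x : 0 <= hK x.
Proof. exact: dist1_ge0. Qed.

Lemma hK_le2 x : hK x <= 2.
Proof. exact: dist1_le2. Qed.

Lemma hK_K x : x \in K -> hK x = 0.
Proof.
move=> Hx; apply/eqP; rewrite eq_le hK_ge0 andbT.
by have [_ /(_ x Hx)] := qf_spec x; rewrite dist1_xx.
Qed.

Lemma hK_lip x y : hK x - hK y <= dist1 R x y.
Proof.
have [Hy _] := qf_spec y; have [_ /(_ _ Hy) Hx] := qf_spec x.
have := dist1_tri x y (qf y); rewrite -/(hK y); lra.
Qed.


Lemma far_nat (a b m r : nat) : (0 < m)%N -> (b %/ m + r < a %/ m)%N -> (b + r * m < a)%N.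
Proof.
move=> Hm H; have H1 := leq_trunc_div a m; have H2 := ltn_ceil b Hm.
set X := (a %/ m)%N in H H1; set Y := (b %/ m)%N in H H2. nia.
Qed.

Variable r : nat.

Definition near (c : gcell) (q : gpoint) : bool :=
  let m := (2 ^ (l - lev c))%N in
  [&& (cx c <= q.1 %/ m + r)%N, (q.1 %/ m <= cx c + r)%N,
      (cy c <= q.2 %/ m + r)%N & (q.2 %/ m <= cy c + r)%N].

Definition TT : {set gcell} := [set c | [exists q in K, near c q]].

Lemma root_TT : Defs.root l \in TT.
Proof.
rewrite inE; apply/existsP; exists q0; rewrite Kq0 /= /near /=.
rewrite subn0 !divn_small ?ltn_ord //.
Qed.

Lemma TT_par (c' c : gcell) : is_child c' c -> c' \in TT -> c \in TT.
Proof.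
rewrite is_childE => /and3P [/eqP H1 /eqP H2 /eqP H3].
rewrite !inE => /existsP [q /andP [Hq Hn]]; apply/existsP; exists q; rewrite Hq /=.
move: Hn; rewrite /near H1.
have Hl := lev_le c'; rewrite H1 in Hl.
have E : (2 ^ (l - lev c) = 2 ^ (l - (lev c).+1) * 2)%N.
  by rewrite -expnSr; f_equal; lia.
rewrite E !divnMA -H2 -H3.
set u := cx c'; set v := (q.1 %/ _)%N; set u' := cy c'; set v' := (q.2 %/ _)%N.
move=> /and4P [A B C D]; apply/and4P; split; lia.
Qed.

Lemma TT_card (i : nat) : (#|[set c in TT | lev c == i]| <= #|K| * (2 * r).+1 * (2 * r).+1)%N.
Proof.
have [Hi|Hi] := leqP i l; last first.
  rewrite (_ : [set c in TT | lev c == i] = finset.set0) ?cards0 //.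
  apply/setP => c; rewrite !inE; case: eqP => // E; have := lev_le c; lia.
set m := (2 ^ (l - i))%N.
pose F (z : gpoint * ('I_(2 * r).+1 * 'I_(2 * r).+1)) : gcell :=
  @mkcell l i (z.1.1 %/ m + z.2.1 - r) (z.1.2 %/ m + z.2.2 - r).
apply: (@leq_trans #|F @: finset.setX K (finset.setTfor ('I_(2 * r).+1 * 'I_(2 * r).+1))|).
  apply: subset_leq_card; apply/fintype.subsetP => c; rewrite !inE => /andP [/existsP [q /andP [Hq Hn]] /eqP Hc].
  move: Hn; rewrite /near Hc -/m => /and4P [A B C D].
  apply/imsetP; exists (q, (inord (cx c + r - q.1 %/ m), inord (cy c + r - q.2 %/ m))).
    by rewrite !inE Hq.
  rewrite /F /= !inordK; try lia.
  apply: cell_eq => //; lia.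
apply: leq_trans (leq_imset_card _ _) _.
by rewrite cardsX cardsT card_prod !card_ord mulnA.
Qed.

Lemma TT_far i (pt : gpoint) : (i <= l)%N -> pcell i pt \notin TT ->
  r%:R / 2 ^+ i < hK pt.
Proof.
move=> Hi; have [Hq _] := qf_spec pt.
rewrite inE => /existsP H.
have Hn : ~~ near (pcell i pt) (qf pt).
  by apply/negP => Hn; apply: H; exists (qf pt); rewrite Hq.
move: Hn; rewrite /near lev_pcell // cx_pcell // cy_pcell //.
set m := (2 ^ (l - i))%N; have Hm : (0 < m)%N := e2gt0 _.
move=> Hn.
have key : forall a b : nat, (b %/ m + r < a %/ m)%N ->
    (r * m)%:R < `|a%:R - b%:R| :> R.
  move=> a b /(far_nat Hm) H'.
  have : (b%:R + (r * m)%:R < a%:R :> R) by rewrite -natrD ltr_nat.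
  have := ler_norm (a%:R - b%:R : R); lra.
have key' : forall a b : nat, (b %/ m + r < a %/ m)%N ->
    (r * m)%:R < `|b%:R - a%:R| :> R.
  by move=> a b /key; rewrite distrC.
have S : (r * m)%:R < `|(pt.1 : nat)%:R - ((qf pt).1 : nat)%:R| +
    `|(pt.2 : nat)%:R - ((qf pt).2 : nat)%:R| :> R.
  move: Hn; rewrite !negb_and -!ltnNge => /or4P [A|A|A|A].
  - have := key _ _ A; have := normr_ge0 ((pt.2 : nat)%:R - ((qf pt).2 : nat)%:R : R); lra.
  - have := key' _ _ A; have := normr_ge0 ((pt.2 : nat)%:R - ((qf pt).2 : nat)%:R : R); lra.
  - have := key _ _ A; have := normr_ge0 ((pt.1 : nat)%:R - ((qf pt).1 : nat)%:R : R); lra.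
  - have := key' _ _ A; have := normr_ge0 ((pt.1 : nat)%:R - ((qf pt).1 : nat)%:R : R); lra.
rewrite /hK /dist1.
have -> : (2 ^ l)%:R = m%:R * 2 ^+ i :> R.
  by rewrite /m -natrX -natrM -expnD subnK.
rewrite invfM mulrA ltr_pM2r ?invr_gt0 ?exprn_gt0 //.
by rewrite ltr_pdivlMr ?ltr0n // -natrM.
Qed.


Variable s : gpoint -> R.
Hypothesis s0 : forall x, 0 <= s x.

Lemma Pmat_ge0 c : 0 <= Pmat s c.
Proof. by rewrite /Pmat mulr_ge0 ?invr_ge0 ?exprn_ge0 // sumr_ge0. Qed.

Lemma Pmat_child (p : gcell) : (lev p < l)%N ->
  2 * \sum_(c | is_child c p) Pmat s c = Pmat s p.
Proof.
move=> Hl.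
have -> : \sum_(c | is_child c p) Pmat s c =
   (2 ^+ (lev p).+1)^-1 * \sum_(c | is_child c p) \sum_(pt | in_cell c pt) s pt.
  rewrite mulr_sumr; apply: eq_big => // c; rewrite is_childE /Pmat.
  by case/and3P => /eqP -> _ _.
rewrite child_sum // /Pmat exprS invfM mulrA mulrA divff ?mul1r //.
by rewrite pnatr_eq0.
Qed.

Definition yT (c : gcell) : R := if c \in TT then Pmat s c else 0.

Lemma yT_Mw w : (#|K| * (2 * r).+1 * (2 * r).+1 <= w)%N -> in_Mw w yT.
Proof.
move=> Hw; split.
- by move=> c; rewrite /yT; case: ifP => // _; apply: Pmat_ge0.
- exists TT; split; last by move=> c; rewrite /yT; case: ifP => //; rewrite eqxx.
  split; first exact: root_TT.
    exact: TT_par.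
  by move=> i; apply: leq_trans (TT_card i) Hw.
move=> p Hl; rewrite /yT; case: ifP => Hp.
  rewrite -Pmat_child // ler_wpM2l //; apply: ler_sum => c _.
  by case: ifP => _; rewrite ?Pmat_ge0.
rewrite big1 ?mulr0 // => c Hc; case: ifP => // Hc'.
by rewrite (TT_par Hc Hc') in Hp.
Qed.

Lemma yT_l1 : (0 < r)%N ->
  l1c (fun c => Pmat s c - yT c) <= 2 / r%:R * \sum_x s x * hK x.
Proof.
move=> Hr.
have E1 : l1c (fun c => Pmat s c - yT c) =
    \sum_x s x * \sum_(c | in_cell c x) (if c \in TT then 0 else (2 ^+ lev c)^-1).
  rewrite /l1c.
  have -> : \sum_c `|Pmat s c - yT c| =
      \sum_c \sum_(x | in_cell c x) (if c \in TT then 0 else (2 ^+ lev c)^-1) * s x.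
    apply: eq_bigr => c _; rewrite /yT; case: ifP => _.
      by rewrite subrr normr0 big1 // => x _; rewrite mul0r.
    by rewrite subr0 ger0_norm ?Pmat_ge0 // /Pmat mulr_sumr.
  rewrite (exchange_big_dep xpredT) //=; apply: eq_bigr => x _.
  by rewrite mulr_sumr; apply: eq_bigr => c _; rewrite mulrC.
rewrite E1 mulr_sumr; apply: ler_sum => x _.
rewrite mulrCA; apply: ler_wpM2l => //.
rewrite sum_in_cell.
apply: le_trans (_ : \sum_(i < l.+1) (if (2 ^+ i)^-1 < hK x / r%:R then (2 ^+ i)^-1 else 0) <= _).
  apply: ler_sum => i _.
  have Hi : (i <= l)%N by rewrite -ltnS ltn_ord.
  rewrite lev_pcell //; case: ifP => HT; case: ifP => // Hlt.
  - by rewrite invr_ge0 exprn_ge0.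
  - have H := TT_far Hi (negbT HT).
    have : (2 ^+ i)^-1 < hK x / r%:R by rewrite ltr_pdivlMr ?ltr0n // mulrC.
    by rewrite Hlt.
apply: le_trans (geom_tail _ _) _.
  by rewrite divr_ge0 ?hK_ge0.
by rewrite mulrA mulrAC.
Qed.


Lemma coupling_exists (p q : gpoint -> R) : (forall x, 0 <= p x) -> (forall x, 0 <= q x) ->
  \sum_x p x = \sum_x q x ->
  exists g : gpoint -> gpoint -> R, [/\ (forall x y, 0 <= g x y),
     (forall x, \sum_y g x y = p x) & (forall y, \sum_x g x y = q y)].
Proof.
move=> Hp Hq Hpq; set M := \sum_x q x.
exists (fun x y => p x * q y / M); split.
- by move=> x y; rewrite divr_ge0 ?mulr_ge0 ?sumr_ge0.
- move=> x; under eq_bigr do rewrite mulrAC.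
  rewrite -mulr_sumr -/M.
  have [M0|M0] := eqVneq M 0; last by rewrite mulfVK.
  have := @psumr_eq0P _ _ xpredT p (fun x _ => Hp x); rewrite Hpq -/M M0.
  by move=> /(_ erefl x erefl) ->; rewrite !mul0r.
- move=> y; under eq_bigr do rewrite -mulrA mulrC.
  rewrite -mulr_sumr Hpq -/M.
  have [M0|M0] := eqVneq M 0; last by rewrite divfK.
  have := @psumr_eq0P _ _ xpredT q (fun x _ => Hq x); rewrite -/M M0.
  by move=> /(_ erefl y erefl) ->; rewrite !mul0r.
Qed.

Lemma EMD_lb (p q : gpoint -> R) : (forall x, 0 <= p x) -> (forall x, 0 <= q x) ->
  \sum_x p x = \sum_x q x ->
  \sum_x p x * hK x - \sum_x q x * hK x <= EMD p q.
Proof.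
move=> Hp Hq Hpq; apply: le_inf_of.
  have [g [H0 H1 H2]] := coupling_exists Hp Hq Hpq.
  by eexists; exists g; split.
move=> v [g [H0 H1 H2 ->]].
have -> : \sum_x p x * hK x = \sum_x \sum_y g x y * hK x.
  by apply: eq_bigr => x _; rewrite -H1 mulr_suml.
have -> : \sum_x q x * hK x = \sum_x \sum_y g x y * hK y.
  rewrite exchange_big /=; apply: eq_bigr => y _; by rewrite -H2 mulr_suml.
rewrite -sumrB; apply: ler_sum => x _; rewrite -sumrB; apply: ler_sum => y _.
by rewrite -mulrBr ler_wpM2l // hK_lip.
Qed.

Lemma emd_lb (s' : gpoint -> R) : (forall x, s' x != 0 -> x \in K) ->
  \sum_x s x * hK x <= emd_norm (fun x => s x - s' x).
Proof.
move=> Hs'; apply: le_inf_of.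
  eexists; exists (fun=> 0), (fun=> 0), (fun x => s x - s' x); split => //.
  by move=> x; rewrite subrr add0r.
move=> v [p [q [rr [Hp Hq Hw Hpq ->]]]].
have -> : \sum_x s x * hK x = \sum_x p x * hK x - \sum_x q x * hK x + \sum_x rr x * hK x.
  rewrite -sumrB -big_split /=; apply: eq_bigr => x _.
  rewrite -mulrBl -mulrDl Hw.
  have [->|H] := eqVneq (s' x) 0; first by rewrite subr0.
  by rewrite hK_K ?Hs' // !mulr0.
apply: lerD; first exact: EMD_lb.
rewrite /l1p mulr_sumr; apply: ler_sum => x _.
apply: le_trans (_ : `|rr x| * hK x <= _).
  by apply: ler_wpM2r; [apply: hK_ge0 | apply: ler_norm].
by rewrite mulrC ler_wpM2r ?hK_le2.
Qed.

End StepD.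

Section Avg.
Variable R : realType.
Variable T : finType.

Lemma avg_le (A B : {set T}) (f g : T -> R) : (#|A| <= #|B|)%N ->
  (forall a b, a \in A -> b \in B -> f a <= g b) -> (forall b, b \in B -> 0 <= g b) ->
  \sum_(a in A) f a <= \sum_(b in B) g b.
Proof.
move=> HAB Hfg Hg.
have G0 : 0 <= \sum_(b in B) g b by apply: sumr_ge0.
have [B0|Bpos] := posnP #|B|.
  have A0 : #|A| = 0%N by lia.
  rewrite big_pred0 // => a; apply/negP => Ha.
  by have := card0_eq A0 a; rewrite Ha.
have H1 : #|B|%:R * \sum_(a in A) f a <= #|A|%:R * \sum_(b in B) g b.
  rewrite mulr_sumr.
  apply: le_trans (_ : \sum_(a in A) \sum_(b in B) g b <= _).
    apply: ler_sum => a Ha; rewrite mulr_natl -sumr_const.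
    by apply: ler_sum => b Hb; apply: Hfg.
  by rewrite sumr_const mulr_natl.
have H2 : #|A|%:R * \sum_(b in B) g b <= #|B|%:R * \sum_(b in B) g b.
  by apply: ler_wpM2r => //; rewrite ler_nat.
by rewrite -(ler_pM2l (_ : 0 < #|B|%:R)) ?ltr0n //; apply: le_trans H1 H2.
Qed.

End Avg.

Section Recur.
Variable R : realType.

Lemma recur_sum (l : nat) (a b : nat -> R) : (forall i, 0 <= a i) ->
  (forall i, 0 <= b i) -> a 0%N = 0 ->
  (forall i, (1 <= i <= l)%N -> a i <= a i.-1 / 2 + b i) ->
  \sum_(i < l.+1) a i <= 2 * \sum_(i < l.+1) b i.
Proof.
move=> H0 Hb Ha0 Hrec.
have E1 : \sum_(i < l.+1) a i = \sum_(i < l) a i.+1 by rewrite big_ord_recl Ha0 add0r.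
have E2 : \sum_(i < l) a i.+1 <= \sum_(i < l) (a i / 2 + b i.+1).
  by apply: ler_sum => i _; apply: (Hrec i.+1); rewrite /= ltn_ord.
have E3 : \sum_(i < l) a i <= \sum_(i < l.+1) a i.
  by rewrite big_ord_recr /= lerDl.
have E4 : \sum_(i < l) b i.+1 <= \sum_(i < l.+1) b i.
  by rewrite [X in _ <= X]big_ord_recl /= lerDr.
rewrite big_split /= -mulr_suml in E2.
lra.
Qed.

End Recur.

Section StepC.
Variable R : realType.
Variable l w : nat.
Local Notation gcell := (gcell l).
Local Notation gpoint := (gpoint l).
Variables (x nt y' : gcell -> R) (S : nat -> {set gcell}) (Tst : {set gcell}).
Hypothesis Hx0 : forall c, 0 <= x c.
Hypothesis Hxc : forall p, (lev p < l)%N -> 2 * \sum_(c | is_child c p) x c = x p.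
Hypothesis Hy : forall c, y' c = x c + nt c.
Hypothesis HS : greedy_run w y' S.
Hypothesis HT : in_Tw w Tst.

Definition Vset i := [set c in Tst | lev c == i] :\: S i.
Definition aa i := \sum_(c in Vset i) x c.
Definition bb i := \sum_(c in S i :\: Tst) x c + \sum_(c in S i) `|nt c| + \sum_(c in Vset i) `|nt c|.

Lemma S_lev i c : (i <= l)%N -> c \in S i -> lev c = i.
Proof.
case: HS => HS0 HSi.
elim: i c => [|i IH] c Hi.
  by rewrite HS0 inE => /eqP ->.
have [Hsub _ _] := HSi i.+1 (ltac:(lia)).
move=> Hc; have := fintype.subsetP Hsub c Hc; rewrite inE => /existsP [p /andP [Hp Hch]].
move: Hch; rewrite is_childE => /and3P [/eqP -> _ _].
by rewrite (IH p) //; lia.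
Qed.

Lemma aa_ge0 i : 0 <= aa i.
Proof. by apply: sumr_ge0. Qed.
Lemma bb_ge0 i : 0 <= bb i.
Proof. by rewrite !addr_ge0 // sumr_ge0. Qed.

Lemma aa0 : aa 0 = 0.
Proof.
rewrite /aa big_pred0 // => c; apply/negP; rewrite !inE => /andP [Hn /andP [_ /eqP H]].
case: HS => HS0 _; move: Hn; rewrite HS0 inE (lev0_root H) eqxx //.
Qed.


Lemma aa_rec i : (1 <= i <= l)%N -> aa i <= aa i.-1 / 2 + bb i.
Proof.
move=> /andP [Hi1 Hil].
case: HS => HS0 HSi; have [Hsub Hcard Hgr] := HSi i (ltac:(lia)).
case: HT => HTr HTpar HTc.
rewrite /aa (bigID (fun c => par c \in S i.-1)) /= addrC.
apply: lerD.
  rewrite (partition_big (@par l) (fun p => p \in Vset i.-1)) /=; last first.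
    move=> c /andP [Hc HnP]; move: Hc; rewrite !inE => /andP [HnS /andP [HcT /eqP Hlc]].
    have Hch : is_child c (par c) by apply: par_child; lia.
    rewrite HnP /= (HTpar _ _ Hch HcT) /= /par lev_mkcell ?Hlc //; lia.
  rewrite mulr_suml; apply: ler_sum => p Hp.
  have Hlp : (lev p < l)%N.
    by move: Hp; rewrite !inE => /andP [_ /andP [_ /eqP ->]]; lia.
  rewrite -(Hxc Hlp) mulrAC divff ?mul1r ?pnatr_eq0 //.
  apply: (@sum_subset R _ (fun c => ((c \in Vset i) && ~~ (par c \in S i.-1)) && (par c == p))
            (fun c => is_child c p)) => // c.
  case/andP => /andP [Hc _] /eqP <-; apply: par_child.
  by move: Hc; rewrite !inE => /andP [_ /andP [_ /eqP ->]].
set V1 := [set c in Vset i | par c \in S i.-1].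
rewrite (eq_bigl (fun c => c \in V1)); last by move=> c; rewrite [c \in V1]inE.
case: (set_0Vmem V1) => [->|[c0 Hc0]].
  by rewrite big_set0 bb_ge0.
have HV1 : forall c, c \in V1 -> c \in children (S i.-1) :\: S i.
  move=> c; rewrite !inE => /andP [/andP [HnS /andP [HcT /eqP Hlc]] Hp].
  rewrite HnS /=; apply/existsP; exists (par c); rewrite Hp /=.
  by apply: par_child; lia.
have Hw : #|S i| = w.
  have Hpr : S i \proper children (S i.-1).
    apply/properP; split => //; exists c0; have := HV1 c0 Hc0; rewrite inE.
      by case/andP.
    by case/andP.
  have := proper_card Hpr; rewrite Hcard; lia.
have HSl : forall c, c \in S i -> lev c = i by move=> c; apply: S_lev.
have Hc1 : (#|V1| <= #|S i :\: Tst|)%N.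
  have E1 : (#|V1| <= #|Vset i|)%N.
    by apply: subset_leq_card; apply/fintype.subsetP => c; rewrite inE => /andP [].
  have E2 := HTc i.
  have E3 : [set c in Tst | lev c == i] :&: S i = S i :&: Tst.
    apply/setP => c; rewrite !inE; case Hc: (c \in S i); rewrite ?andbF ?andbT //=.
    by rewrite HSl // eqxx andbT.
  move: E1; rewrite /Vset !cardsD E3 Hw; lia.
apply: le_trans (_ : \sum_(c in V1) (y' c + `|nt c|) <= _).
  apply: ler_sum => c _; rewrite Hy; have := ler_norm (- nt c); rewrite normrN; lra.
rewrite big_split /=.
have A1 : \sum_(c in V1) y' c <= \sum_(c in S i :\: Tst) (x c + `|nt c|).
  apply: avg_le => // [a b Ha Hb|b _]; last by rewrite addr_ge0.
  apply: le_trans (_ : y' b <= _); last by rewrite Hy lerD // ler_norm.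
  apply: Hgr; first by move: Hb; rewrite inE => /andP [].
  exact: HV1.
rewrite big_split /= in A1.
have A2 : \sum_(c in S i :\: Tst) `|nt c| <= \sum_(c in S i) `|nt c|.
  apply: (@sum_subset R _ (fun c => c \in S i :\: Tst) (fun c => c \in S i)) => // c.
  by rewrite inE => /andP [].
have A3 : \sum_(c in V1) `|nt c| <= \sum_(c in Vset i) `|nt c|.
  apply: (@sum_subset R _ (fun c => c \in V1) (fun c => c \in Vset i)) => // c.
  by rewrite inE => /andP [].
rewrite /bb; lra.
Qed.

End StepC.

Section Final.
Variable R : realType.
Variable l : nat.
Local Notation gcell := (gcell l).
Local Notation gpoint := (gpoint l).

Definition pt0 : gpoint := (Ordinal (e2gt0 l), Ordinal (e2gt0 l)).

Lemma emd_norm_ge0 (f : gpoint -> R) : 0 <= emd_norm f.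
Proof.
apply: inf_ge0 => v [p [q [r [_ _ _ _ ->]]]].
by rewrite addr_ge0 ?EMD_ge0 // mulr_ge0 ?l1p_ge0.
Qed.

Lemma best_ge0 k (s : gpoint -> R) : 0 <= best_ksparse_emd k s.
Proof. by apply: inf_ge0 => v [s' [_ ->]]; apply: emd_norm_ge0. Qed.

Lemma stepD_all (s : gpoint -> R) (s0 : forall x, 0 <= s x) (k r w : nat) :
  (0 < k)%N -> (0 < r)%N -> (k * (2 * r).+1 * (2 * r).+1 <= w)%N ->
  forall ystar : gcell -> R,
  (forall y, in_Mw w y -> l1c (fun c => Pmat s c - ystar c) <= l1c (fun c => Pmat s c - y c)) ->
  l1c (fun c => Pmat s c - ystar c) <= 2 / r%:R * best_ksparse_emd k s.
Proof.
move=> Hk Hr Hw ystar Hopt.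
set E := l1c _.
have Hr' : 0 < r%:R :> R by rewrite ltr0n.
suff H : r%:R / 2 * E <= best_ksparse_emd k s.
  rewrite -(ler_pM2l (_ : 0 < r%:R / 2)) ?divr_gt0 // mulrA.
  have -> : r%:R / 2 * (2 / r%:R) = 1 :> R.
    by rewrite mulrA divfK ?pnatr_eq0 // divff // gt_eqF.
  by rewrite mul1r.
apply: le_inf_of.
  exists (emd_norm (fun x => s x - 0)); exists (fun=> 0); split => //.
  apply: leq_trans (_ : 0 <= k)%N => //; rewrite leqn0 cards_eq0; apply/eqP/setP => x.
  by rewrite !inE eqxx.
move=> v [s' [Hc ->]].
set supp := [set x | s' x != 0].
suff main : forall (K : {set gpoint}) q0, q0 \in K -> (#|K| <= k)%N -> (forall x, s' x != 0 -> x \in K) ->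
    r%:R / 2 * E <= emd_norm (fun x => s x - s' x).
  case: (set_0Vmem supp) => [E0|[q0 Hq0]].
    apply: (main (finset.set1 pt0) pt0); first by rewrite inE.
      by rewrite cards1.
    move=> x Hx; have : x \in supp by rewrite inE.
    by rewrite E0 inE.
  apply: (main supp q0) => // x Hx; by rewrite inE.
move=> K q0 Kq0 HK HKs.
have Hw' : (#|K| * (2 * r).+1 * (2 * r).+1 <= w)%N.
  apply: leq_trans Hw; rewrite -!mulnA leq_mul2r HK orbT //.
have H1 := Hopt _ (yT_Mw Kq0 s0 Hw').
have H2 := yT_l1 Kq0 s0 Hr.
have H3 := emd_lb Kq0 s HKs.
have H4 : E <= 2 / r%:R * emd_norm (fun x => s x - s' x).
  apply: le_trans H1 _; apply: le_trans H2 _; apply: ler_wpM2l => //.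
  by rewrite divr_ge0 ?ler0n.
rewrite -(ler_pM2l (_ : 0 < 2 / r%:R)) ?divr_gt0 //.
rewrite mulrA.
have -> : 2 / r%:R * (r%:R / 2) = 1 :> R.
  by rewrite mulrA divfK ?gt_eqF // divff // pnatr_eq0.
by rewrite mul1r.
Qed.

Lemma l1c_Aj (f g : gpoint -> R) :
  l1c (fun c => Pmat f c - Pmat g c) = \sum_(j < l.+1) Aj (fun x => f x - g x) j / 2 ^+ j.
Proof.
rewrite /l1c (partition_big (fun c : gcell => tag c) xpredT) //=.
apply: eq_bigr => j _; rewrite /Aj mulr_suml.
apply: eq_bigr => c /eqP Hc.
rewrite /Pmat -mulrBr sumrB normrM ger0_norm ?invr_ge0 ?exprn_ge0 // mulrC.
by rewrite /lev Hc.
Qed.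

End Final.

Theorem lemma4 :
  exists C1 C2 : Rdefinitions.R, 0 < C1 /\ 0 < C2 /\
  forall (eta' : Rdefinitions.R) (k w l : nat),
    0 < eta' < 1 ->
    w = `|Num.ceil (C1 * k%:R / eta' ^+ 2)|%N ->
  forall (s : gpoint l -> Rdefinitions.R) (nu : gcell l -> Rdefinitions.R),
    (forall x, 0 <= s x) ->
  (* y'_i = 2^-i (P_i s + nu_i), stacked over all levels *)
  let y' := fun c : gcell l => (2 ^+ lev c)^-1 *
              (\sum_(p : gpoint l | in_cell c p) s p + nu c) in
  forall S : nat -> {set gcell l},
    greedy_run w y' S ->
  let Sall := \bigcup_(i < l.+1) S i in
  let yhat := fun c => if c \in Sall then y' c else 0 in
  forall shat : gpoint l -> Rdefinitions.R,
    (forall x, 0 <= shat x) ->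
    (forall s' : gpoint l -> Rdefinitions.R, (forall x, 0 <= s' x) ->
       l1c (fun c => yhat c - Pmat shat c) <= l1c (fun c => yhat c - Pmat s' c)) ->
  forall ystar : gcell l -> Rdefinitions.R,
    in_Mw w ystar ->
    (forall y, in_Mw w y ->
       l1c (fun c => Pmat s c - ystar c) <= l1c (fun c => Pmat s c - y c)) ->
  forall Tstar : {set gcell l},
    in_Tw w Tstar ->
    (forall c, ystar c != 0 -> c \in Tstar) ->
  let V := fun i : nat => [set c in Tstar | lev c == i] :\: S i in
  emd_norm (fun x => s x - shat x) <=
    eta' * best_ksparse_emd k s
    + C2 * \sum_(i < l.+1) (2 ^+ i)^-1 *
             \sum_(c in V i :|: S i | lev c == i) `|nu c|.
Proof.
exists (200 ^+ 2), 50; split; first by rewrite exprn_gt0. split; first lra.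
move=> eta' k w l /andP [eta0 eta1] Hw s nu s0 y' S HS Sall yhat shat shat0 Hshat
  ystar HyMw Hyopt Tst HTst HTsupp.
cbv zeta.
set V := (fun i : nat => [set c in Tst | lev c == i] :\: S i).
set R := Rdefinitions.R.
have Hk : (0 < k)%N.
  case: HyMw => _ [T [[HrT _ HcT] _]] _.
  rewrite lt0n; apply/negP => /eqP k0.
  have w0 : w = 0%N by rewrite Hw k0 mulr0 mul0r ceil0.
  have := HcT 0%N; rewrite w0 leqn0 cards_eq0 => /eqP/setP/(_ (Defs.root l)).
  by rewrite !inE HrT.
pose x := Pmat s.
pose nt := fun c : gcell l => (2 ^+ lev c)^-1 * nu c.
have Hy : forall c, y' c = x c + nt c by move=> c; rewrite /y' /x /nt /Pmat mulrDr.
have Hx0 : forall c, 0 <= x c := Pmat_ge0 s0.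
have Hxc : forall p, (lev p < l)%N -> 2 * \sum_(c | is_child c p) x c = x p.
  by move=> p Hp; apply: Pmat_child.
set N := \sum_(i < l.+1) (2 ^+ i)^-1 * \sum_(c in V i :|: S i | lev c == i) `|nu c|.
set E := l1c (fun c => Pmat s c - ystar c).
set Eout := \sum_(c | c \notin Tst) x c.
have A := stepA_main (fun x => s x - shat x).
rewrite -l1c_Aj in A.
have B : l1c (fun c => Pmat s c - Pmat shat c) <= 2 * l1c (fun c => x c - yhat c).
  have H := Hshat s s0.
  have E1 : l1c (fun c => yhat c - Pmat s c) = l1c (fun c => x c - yhat c).
    by apply: eq_bigr => c _; rewrite distrC.
  rewrite E1 in H.
  apply: le_trans (_ : l1c (fun c => x c - yhat c) + l1c (fun c => yhat c - Pmat shat c) <= _).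
    rewrite /l1c -big_split /=; apply: ler_sum => c _.
    by rewrite (le_trans _ (ler_normD _ _)) // addrA subrK.
  lra.
have C4 : l1c (fun c => x c - yhat c) =
    \sum_(c in Sall) `|nt c| + \sum_(c | c \notin Sall) x c.
  rewrite /l1c (bigID (fun c => c \in Sall)) /=; congr (_ + _); apply: eq_bigr => c Hc.
    by rewrite /yhat Hc Hy opprD addrA subrr add0r normrN.
  by rewrite /yhat (negbTE Hc) subr0 ger0_norm.
have HSl : forall i c, (i <= l)%N -> c \in S i -> lev c = i.
  by move=> i c; apply: (S_lev HS).
have HSall : forall c, c \in Sall -> c \in S (lev c).
  move=> c /bigcupP [i _ Hc].
  by rewrite (HSl i c) // -ltnS ltn_ord.
have C5 : \sum_(c | c \notin Sall) x c <= Eout + \sum_(i < l.+1) aa x S Tst i.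
  rewrite (bigID (fun c => c \in Tst)) /= addrC; apply: lerD.
    apply: (@sum_subset R _ (fun c => (c \notin Sall) && (c \notin Tst)) (fun c => c \notin Tst)) => //.
    by move=> c /andP [].
  rewrite (partition_big (fun c : gcell l => tag c) xpredT) //=.
  apply: ler_sum => j _.
  apply: (@sum_subset R _ _ (fun c => c \in Vset S Tst j)) => // c.
  case/andP => /andP [HnS HT] /eqP Hj.
  rewrite !inE HT /lev Hj eqxx !andbT /=.
  by apply: contra HnS => HcS; apply/bigcupP; exists j.
have C6 : Eout <= E.
  apply: le_trans (_ : \sum_(c | c \notin Tst) `|x c - ystar c| <= _).
    apply: ler_sum => d Hd.
    have -> : ystar d = 0.
      by apply/eqP; apply: contraNT Hd => /HTsupp.
    by rewrite subr0 ger0_norm.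
  by apply: (@sum_subset R _ _ xpredT) => //.
have C7 : \sum_(i < l.+1) aa x S Tst i <= 2 * \sum_(i < l.+1) bb x nt S Tst i.
  apply: recur_sum.
  - exact: aa_ge0.
  - exact: bb_ge0.
  - exact: (aa0 x Tst HS).
  - by move=> i Hi; apply: (aa_rec Hx0 Hxc Hy HS HTst).
have HVl : forall i c, c \in V i -> lev c = i.
  by move=> i c; rewrite !inE => /andP [_ /andP [_ /eqP]].
have noise : forall (i : 'I_l.+1) (Q : {set gcell l}),
    (forall c, c \in Q -> c \in V i :|: S i) -> (forall c, c \in Q -> lev c = i) ->
    \sum_(c in Q) `|nt c| <= (2 ^+ i)^-1 * \sum_(c in V i :|: S i | lev c == i) `|nu c|.
  move=> i Q HA HAl.
  have -> : \sum_(c in Q) `|nt c| = (2 ^+ i)^-1 * \sum_(c in Q) `|nu c|.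
    rewrite mulr_sumr; apply: eq_bigr => c Hc.
    by rewrite /nt normrM HAl // ger0_norm // invr_ge0 exprn_ge0.
  apply: ler_wpM2l; first by rewrite invr_ge0 exprn_ge0.
  apply: (@sum_subset R _ _ (fun c => (c \in V i :|: S i) && (lev c == i))) => // c Hc.
  by rewrite HA // HAl // eqxx.
have C8 : \sum_(i < l.+1) bb x nt S Tst i <= Eout + 2 * N.
  rewrite /bb !big_split /= -addrA; apply: lerD.
    rewrite /Eout (partition_big (fun c : gcell l => tag c) xpredT) //=.
    apply: ler_sum => j _.
    apply: (@sum_subset R _ _ (fun c => (c \notin Tst) && (tag c == j))) => // c.
    rewrite inE => /andP [HnT HcS]; rewrite HnT /=; apply/eqP/val_inj => /=.
    by apply: (HSl j c) => //; rewrite -ltnS ltn_ord.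
  rewrite /N mulr_sumr -big_split /=; apply: ler_sum => i _.
  rewrite mulr2n mulrDl mul1r; apply: lerD; apply: noise.
  - by move=> c Hc; rewrite inE Hc orbT.
  - by move=> c Hc; apply: HSl => //; rewrite -ltnS ltn_ord.
  - by move=> c Hc; rewrite inE Hc.
  - by move=> c Hc; apply: HVl.
have C9 : \sum_(c in Sall) `|nt c| <= N.
  rewrite (partition_big (fun c : gcell l => tag c) xpredT) //=.
  apply: ler_sum => j _.
  apply: le_trans (noise j (S j) _ _).
  - apply: (@sum_subset R _ _ (fun c => c \in S j)) => // c /andP [Hc /eqP Hj].
    by have := HSall c Hc; rewrite /lev Hj.
  - by move=> c Hc; rewrite inE Hc orbT.
  - by move=> c Hc; apply: HSl => //; rewrite -ltnS ltn_ord.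
have et2 : 0 < eta' ^+ 2 by rewrite exprn_gt0.
pose t := 60 / eta'.
pose f := Num.floor t.
have t0 : 0 <= t by rewrite divr_ge0 // ltW.
have f0 : 0 <= f by rewrite floor_ge0.
pose r := (`|f|%N).+1.
have Hr : (0 < r)%N by [].
have rR : r%:R = f%:~R + 1 :> R by rewrite /r -addn1 natrD natr_absz ger0_norm.
have r1 : t < r%:R.
  by have := floorD1_gt t; rewrite intrD -/f rR.
have r2 : r%:R <= t + 1 by rewrite rR lerD2r floor_le_tmp.
have u1 : 1 < eta'^-1 by rewrite invf_gt1.
have tE : t = 60 * eta'^-1 by [].
have Hkw : (k * (2 * r).+1 * (2 * r).+1 <= w)%N.
  have Hc0 : 0 <= Num.ceil (200 ^+ 2 * k%:R / eta' ^+ 2).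
    rewrite ceil_ge0; have : 0 <= 200 ^+ 2 * k%:R / eta' ^+ 2.
      apply: divr_ge0; last exact: ltW.
      by apply: mulr_ge0 => //; rewrite exprn_ge0.
    move=> ?; lra.
  rewrite -(ler_nat R) Hw natr_absz ger0_norm //.
  apply: le_trans (ceil_ge _).
  have e : ((2 * r).+1)%:R = 2 * r%:R + 1 :> R by rewrite -addn1 natrD natrM.
  rewrite !natrM e.
  set a := 2 * r%:R + 1.
  have r1' : 1 <= r%:R :> R by rewrite ler1n.
  have a0 : 0 <= a by rewrite /a; lra.
  have a1 : a <= 200 * eta'^-1.
    have : r%:R <= 61 * eta'^-1 by lra.
    rewrite /a; lra.
  have a2 : a * a <= (200 * eta'^-1) * (200 * eta'^-1).
    by apply: ler_pM.
  have k0 : 0 <= k%:R :> R by [].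
  have -> : 200 ^+ 2 * k%:R / eta' ^+ 2 = k%:R * ((200 * eta'^-1) * (200 * eta'^-1)) :> R.
    rewrite expr2 invfM; ring.
  by rewrite -mulrA; apply: ler_wpM2l.
have D := stepD_all s0 Hk Hr Hkw Hyopt.
have best0 := best_ge0 k s.
have D2 : 30 * E <= eta' * best_ksparse_emd k s.
  apply: le_trans (_ : 30 * (2 / r%:R * best_ksparse_emd k s) <= _).
    by rewrite ler_wpM2l.
  rewrite mulrA; apply: ler_wpM2r => //.
  have rp : 0 < r%:R :> R by rewrite ltr0n.
  rewrite mulrA ler_pdivrMr //.
  move: r1; rewrite tE => r1.
  have : 60 < eta' * r%:R.
    by move: r1; rewrite -ltr_pdivrMl // mulrC.
  lra.
rewrite -/E in D.
lra.
Qed.
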